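(* Fix $d\in\mathbf{N}$. The following statement (C1) is equivalent to statement (C2), and statement (C1') is equivalent to statement (C2'). (C1) For every $N\in\mathbf{N}$: if there exist an orthonormal basis $v_1,\dots,v_{d+1}$ of $\mathbf{R}^{d+1}$ and $x_1,\dots,x_N\in\mathbf{S}^d$ such that $\mu=\frac1N\sum_{i=1}^N\delta_{x_i}$ and $x_i\in\{v_j,-v_j\}$ whenever $i\equiv j \pmod{d+1}$, then $\mu$ maximizes $E_1$ over $\mathcal{P}_N^{=}(\mathbf{S}^d)$. (C2) For every $\alpha>1$ and every $N\in\mathbf{N}$: $\mu$ maximizes $E_\alpha$ over $\mathcal{P}_N^{=}(\mathbf{S}^d)$ if and only if there exist an orthonormal basis $v_1,\dots,v_{d+1}$ of $\mathbf{R}^{d+1}$ and $x_1,\dots,x_N\in\mathbf{S}^d$ such that $\mu=\frac1N\sum_{i=1}^N\delta_{x_i}$ and $x_i\in\{v_j,-v_j\}$ whenever $i\equiv j \pmod{d+1}$. (C1') If there exists an orthonormal basis $v_1,\dots,v_{d+1}$ of $\mathbf{R}^{d+1}$ such that $\mu=\sum_{i=1}^{d+1}(a_i\delta_{v_i}+b_i\delta_{-v_i})$ with $a_i,b_i\ge0$ and $a_i+b_i=\frac1{d+1}$ for all $i$, then $\mu$ maximizes $E_1$ over $\mathcal{P}_{\mathrm{fin}}(\mathbf{S}^d)$. (C2') For every $\alpha>1$: $\mu$ maximizes $E_\alpha$ over $\mathcal{P}_{\mathrm{fin}}(\mathbf{S}^d)$ if and only if there exists an orthonormal basis $v_1,\dots,v_{d+1}$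 of $\mathbf{R}^{d+1}$ such that $\mu=\sum_{i=1}^{d+1}(a_i\delta_{v_i}+b_i\delta_{-v_i})$ with $a_i,b_i\ge0$ and $a_i+b_i=\frac1{d+1}$ for all $i$.
   Context: $\mathbf{S}^d=\{x\in\mathbf{R}^{d+1}:|x|=1\}$, with geodesic distance $\rho(x,y)=\arccos(x\cdot y)$. Let $\Lambda_0(t)=\frac{2}{\pi}\min\{t,\pi-t\}$ for $t\in[0,\pi]$ and $\Lambda(x,y)=\Lambda_0(\rho(x,y))\in[0,1]$. For $\alpha\in[1,\infty)$ and a finite nonnegative Borel measure $\mu$ on $\mathbf{S}^d$, $E_\alpha(\mu)=\frac12\iint\Lambda(x,y)^\alpha\,d\mu(x)\,d\mu(y)$. $\delta_x$ is the Dirac probability measure at $x$. $\mathcal{P}_N^{=}(\mathbf{S}^d)$ is the set of probability measures $\frac1N\sum_{i=1}^N\delta_{x_i}$ with $x_i\in\mathbf{S}^d$ (not necessarily distinct); $\mathcal{P}_{\mathrm{fin}}(\mathbf{S}^d)$ is the set of Borel probability measures on $\mathbf{S}^d$ with finite support. *)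

(* Defs.v *)
From mathcomp Require Import all_boot all_order all_algebra.
From mathcomp Require Import all_classical all_reals all_analysis.
Set Implicit Arguments. Unset Strict Implicit. Unset Printing Implicit Defensive.
Import Order.TTheory GRing.Theory Num.Theory.
Local Open Scope ring_scope.

Section Defs.
Variable R : realType.
Variable d : nat.

Definition vec := 'rV[R]_(d.+1).

Definition dot (x y : vec) : R := \sum_(k < d.+1) x 0 k * y 0 k.

Definition on_sphere (x : vec) : Prop := dot x x = 1.

Definition geod (x y : vec) : R := acos (dot x y).

Definition Lambda0 (t : R) : R := 2 / pi * Num.min t (pi - t).

Definition Lambda (x y : vec) : R := Lambda0 (geod x y).

(* A finitely supported (signed) measure, given as a formal finite
   combination sum_k w_k delta_{p_k} of Dirac masses. *)
Definition fmeas := seq (vec * R).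

Definition mass (mu : fmeas) (x : vec) : R := \sum_(p <- mu | p.1 == x) p.2.

Definition same_measure (mu nu : fmeas) : Prop := forall x, mass mu x = mass nu x.

Definition energy (alpha : R) (mu : fmeas) : R :=
  2^-1 * \sum_(p <- mu) \sum_(q <- mu) p.2 * q.2 * powR (Lambda p.1 q.1) alpha.

Definition in_Pfin (mu : fmeas) : Prop :=
  (forall x, 0 <= mass mu x) /\
  (forall x, mass mu x != 0 -> on_sphere x) /\
  \sum_(p <- mu) p.2 = 1.

Definition empirical (N : nat) (x : 'I_N -> vec) : fmeas :=
  [seq (x i, N%:R^-1) | i <- enum 'I_N].

Definition in_PN (N : nat) (mu : fmeas) : Prop :=
  exists x : 'I_N -> vec, (forall i, on_sphere (x i)) /\ same_measure mu (empirical x).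

Definition maximizes (P : fmeas -> Prop) (f : fmeas -> R) (mu : fmeas) : Prop :=
  P mu /\ forall nu, P nu -> f nu <= f mu.

Definition orthonormal_basis (v : 'I_d.+1 -> vec) : Prop :=
  forall j k, dot (v j) (v k) = (j == k)%:R.

(* index j (0-based) with i == j mod (d+1) *)
Definition modidx (N : nat) (i : 'I_N) : 'I_d.+1 := inord (i %% d.+1).

Definition cross_config (N : nat) (mu : fmeas) : Prop :=
  exists (v : 'I_d.+1 -> vec) (x : 'I_N -> vec),
    orthonormal_basis v /\
    (forall i, on_sphere (x i)) /\
    (forall i, x i = v (modidx i) \/ x i = - v (modidx i)) /\
    same_measure mu (empirical x).

Definition cross_combination (v : 'I_d.+1 -> vec) (a b : 'I_d.+1 -> R) : fmeas :=
  flatten [seq [:: (v i, a i); (- v i, b i)] | i <- enum 'I_d.+1].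

Definition cross_fin (mu : fmeas) : Prop :=
  exists (v : 'I_d.+1 -> vec) (a b : 'I_d.+1 -> R),
    orthonormal_basis v /\
    (forall i, 0 <= a i /\ 0 <= b i /\ a i + b i = (d.+1)%:R^-1) /\
    same_measure mu (cross_combination v a b).

Definition C1 : Prop :=
  forall N : nat, (0 < N)%N -> forall mu : fmeas,
    cross_config N mu -> maximizes (in_PN N) (energy 1) mu.

Definition C2 : Prop :=
  forall alpha : R, 1 < alpha -> forall N : nat, (0 < N)%N -> forall mu : fmeas,
    maximizes (in_PN N) (energy alpha) mu <-> cross_config N mu.

Definition C1' : Prop :=
  forall mu : fmeas, cross_fin mu -> maximizes in_Pfin (energy 1) mu.

Definition C2' : Prop :=
  forall alpha : R, 1 < alpha -> forall mu : fmeas,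
    maximizes in_Pfin (energy alpha) mu <-> cross_fin mu.

End Defs.

(* Main.v *)
Require Import Defs.
From mathcomp Require Import all_boot all_order all_algebra all_fingroup.
From mathcomp Require Import all_classical all_reals all_analysis.
From mathcomp Require Import ring lra zify.
Set Implicit Arguments. Unset Strict Implicit. Unset Printing Implicit Defensive.
Import Order.TTheory GRing.Theory Num.Theory.
Local Open Scope ring_scope.

Section Aux.
Variable R : realType.
Variable d : nat.
Local Notation V := (vec R d).

Lemma dotC (x y : V) : dot x y = dot y x.
Proof. by apply: eq_bigr => k _; rewrite mulrC. Qed.

Lemma dotNl (x y : V) : dot (- x) y = - dot x y.
Proof. by rewrite /dot -sumrN; apply: eq_bigr => k _; rewrite mxE mulNr. Qed.

Lemma dotNr (x y : V) : dot x (- y) = - dot x y.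
Proof. by rewrite dotC dotNl dotC. Qed.

Lemma dotDl (x y z : V) : dot (x + y) z = dot x z + dot y z.
Proof. by rewrite /dot -big_split; apply: eq_bigr => k _; rewrite mxE mulrDl. Qed.

Lemma dotDr (x y z : V) : dot z (x + y) = dot z x + dot z y.
Proof. by rewrite dotC dotDl !(dotC z). Qed.

Lemma dotZl (a : R) (x y : V) : dot (a *: x) y = a * dot x y.
Proof. by rewrite /dot mulr_sumr; apply: eq_bigr => k _; rewrite mxE mulrA. Qed.

Lemma dot_ge0 (x : V) : 0 <= dot x x.
Proof. by apply: sumr_ge0 => k _; rewrite -expr2 sqr_ge0. Qed.

Lemma dot_eq0 (x : V) : dot x x = 0 -> x = 0.
Proof.
move=> h; apply/rowP => k; rewrite mxE.
have h0 : forall i : 'I_d.+1, true -> 0 <= x 0 i * x 0 i.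
  by move=> i _; rewrite -expr2 sqr_ge0.
have := @psumr_eq0P _ _ _ _ h0 h k isT.
by move/eqP; rewrite mulf_eq0 orbb => /eqP.
Qed.

Lemma dotBB (x y : V) : dot (x - y) (x - y) = dot x x - 2 * dot x y + dot y y.
Proof. rewrite !dotDl !dotDr !dotNl !dotNr (dotC y x); ring. Qed.

Lemma dotPP (x y : V) : dot (x + y) (x + y) = dot x x + 2 * dot x y + dot y y.
Proof. rewrite !dotDl !dotDr (dotC y x); ring. Qed.

Lemma dot_le1 (x y : V) : on_sphere x -> on_sphere y -> dot x y <= 1.
Proof. move=> hx hy; have := dot_ge0 (x - y); rewrite dotBB hx hy; lra. Qed.

Lemma dot_geN1 (x y : V) : on_sphere x -> on_sphere y -> -1 <= dot x y.
Proof. move=> hx hy; have := dot_ge0 (x + y); rewrite dotPP hx hy; lra. Qed.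

Lemma dot_eq1 (x y : V) : on_sphere x -> on_sphere y -> dot x y = 1 -> x = y.
Proof.
move=> hx hy h; have : dot (x - y) (x - y) = 0 by rewrite dotBB hx hy h; ring.
by move/dot_eq0/eqP; rewrite subr_eq0 => /eqP.
Qed.

Lemma dot_eqN1 (x y : V) : on_sphere x -> on_sphere y -> dot x y = -1 -> y = - x.
Proof.
move=> hx hy h; have : dot (x + y) (x + y) = 0 by rewrite dotPP hx hy h; ring.
by move/dot_eq0/eqP; rewrite addr_eq0 => /eqP ->; rewrite opprK.
Qed.

Lemma sphereN (x : V) : on_sphere x -> on_sphere (- x).
Proof. by rewrite /on_sphere dotNl dotNr opprK. Qed.

Lemma Lambda0_bounds (t : R) : 0 <= t <= pi -> 0 <= Lambda0 t <= 1.
Proof.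
move=> /andP[t0 tp]; have p0 := pi_gt0 R; rewrite /Lambda0.
have key : forall u : R, 0 <= u -> u * 2 <= pi -> 0 <= 2 / pi * u <= 1.
  intros u u0 u2; rewrite mulr_ge0 ?divr_ge0 ?(ltW p0) //=.
  rewrite mulrAC ler_pdivrMr; [lra | exact p0].
have [h|h] := lerP t (pi - t); apply: key; lra.
Qed.

Lemma Lambda0_eq1 (t : R) : 0 <= t <= pi -> Lambda0 t = 1 -> t = pi / 2.
Proof.
move=> /andP[t0 tp]; rewrite /Lambda0; have := pi_gt0 R.
move: tp; move: (pi : R) => p tp p0.
have pn : p != 0 :> R by rewrite gt_eqF.
have [h|h] := lerP t (p - t).
  move=> e; have e2 : t * 2 = p.
    have -> : t * 2 = (2/p*t) * p by field.
    by rewrite e mul1r.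
  by rewrite -e2 mulfK // pnatr_eq0.
move=> e; have e2 : (p - t) * 2 = p.
  have -> : (p - t) * 2 = (2/p*(p - t)) * p by field.
  by rewrite e mul1r.
lra.
Qed.

Lemma Lambda0_eq0 (t : R) : 0 <= t <= pi -> Lambda0 t = 0 -> t = 0 \/ t = pi.
Proof.
move=> /andP[t0 tp]; rewrite /Lambda0; have := pi_gt0 R.
move: tp; move: (pi : R) => p tp p0.
have pn : p != 0 :> R by rewrite gt_eqF.
move/eqP; rewrite mulf_eq0 mulf_eq0 invr_eq0 (negbTE pn) pnatr_eq0 /= => /eqP.
have [h|h] := lerP t (p - t).
  by move=> ->; left.
by move=> e; right; lra.
Qed.

Lemma Lambda_dot0 (x y : V) : dot x y = 0 -> Lambda x y = 1.
Proof.
move=> h; rewrite /Lambda /geod h acos0 /Lambda0; have := pi_gt0 R.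
move: (pi : R) => p p0.
have -> : p - p / 2 = p / 2 by field.
rewrite minxx; field; by rewrite gt_eqF.
Qed.

Lemma Lambda_dot1 (x y : V) : dot x y = 1 -> Lambda x y = 0.
Proof. by move=> h; rewrite /Lambda /geod h acos1 /Lambda0 min_l ?mulr0 // subr0 ltW // pi_gt0. Qed.

Lemma Lambda_dotN1 (x y : V) : dot x y = -1 -> Lambda x y = 0.
Proof. by move=> h; rewrite /Lambda /geod h acosN1 /Lambda0 subrr min_r ?mulr0 // ltW // pi_gt0. Qed.

Lemma acos_rng (x y : V) : on_sphere x -> on_sphere y ->
  0 <= acos (dot x y) <= pi /\ cos (acos (dot x y)) = dot x y.
Proof. by move=> hx hy; apply: acos_def; rewrite dot_le1 // dot_geN1. Qed.

Lemma Lambda_bounds (x y : V) : on_sphere x -> on_sphere y -> 0 <= Lambda x y <= 1.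
Proof. by move=> hx hy; apply: Lambda0_bounds; case: (acos_rng hx hy). Qed.

Lemma Lambda_1 (x y : V) : on_sphere x -> on_sphere y -> Lambda x y = 1 -> dot x y = 0.
Proof.
move=> hx hy h; case: (acos_rng hx hy) => r c.
by rewrite -c (Lambda0_eq1 r h) cos_pihalf.
Qed.

Lemma Lambda_0 (x y : V) : on_sphere x -> on_sphere y -> Lambda x y = 0 ->
  dot x y = 1 \/ dot x y = -1.
Proof.
move=> hx hy h; case: (acos_rng hx hy) => r c.
case: (Lambda0_eq0 r h) => e; rewrite -c e; [left; exact: cos0 | right; exact: cospi].
Qed.

End Aux.

Section P.
Variable R : realType.
Lemma powR_le_id (t a : R) : 0 <= t <= 1 -> 1 <= a -> t `^ a <= t.
Proof.
move=> /andP[t0 t1] a1; have [->|tn] := eqVneq t 0.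
  by rewrite powR0 // gt_eqF // (lt_le_trans _ a1).
by apply: ge1r_powR => //; rewrite t1 andbT lt_neqAle eq_sym tn.
Qed.

Lemma powR_01 (t a : R) : (t = 0 \/ t = 1) -> 0 < a -> t `^ a = t.
Proof. by move=> [->|->] a0; [rewrite powR0 // gt_eqF | rewrite powR1]. Qed.

Lemma powR_eq_id (t a : R) : 0 <= t <= 1 -> 1 < a -> t `^ a = t -> t = 0 \/ t = 1.
Proof.
move=> /andP[t0 t1] a1 e; have [->|tn] := eqVneq t 0; first by left.
right; have : t * t `^ (a - 1) = t * 1 by rewrite mulr_powRB1 ?mulr1 // (lt_trans _ a1).
move/(mulfI tn)/eqP; rewrite powR_eq1 => /orP[/eqP//|/orP[|]].
  by rewrite ltNge t0.
by rewrite subr_eq0 => /eqP ea; move: a1; rewrite ea ltxx.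
Qed.

Lemma powR_gap (t a : R) : 0 <= t <= 1 -> 1 <= a -> t - t `^ a <= a - 1.
Proof.
move=> /andP[t0 t1] a1; have [->|tn] := eqVneq t 0.
  by rewrite powR0 ?subrr ?subr_ge0 // gt_eqF // (lt_le_trans _ a1).
have tp : 0 < t by rewrite lt_neqAle eq_sym tn.
have [->|an] := eqVneq a 1; first by rewrite powRr1 // !subrr.
have ap : 0 < a - 1 by rewrite subr_gt0 lt_neqAle eq_sym an.
rewrite -(mulr_powRB1 t0 (lt_trans ltr01 (_ : 1 < a))); last by rewrite -subr_gt0.
rewrite /powR (negbTE tn).
have h1 := expR_ge1Dx ((a - 1) * ln t).
have h2 : - ln t <= t^-1 - 1.
  rewrite -lnV ?posrE //.
  have hh : 0 < t^-1 by rewrite invr_gt0.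
  have := @le_ln1Dx R (t^-1 - 1); rewrite addrCA subrr addr0; apply; lra.
have h3 : - (t * ln t) <= 1 - t.
  have := ler_wpM2l t0 h2; rewrite mulrBr mulfV // mulr1 mulrN; by [].
have h4 : - (t * ln t) <= 1 by lra.
have h5 : t - t * expR ((a - 1) * ln t) <= (a - 1) * (- (t * ln t)).
  have := ler_wpM2l t0 h1; rewrite mulrDr mulr1; nra.
have h6 : (a - 1) * (- (t * ln t)) <= (a - 1) * 1 by rewrite ler_wpM2l // ltW.
lra.
Qed.
End P.

Section En.
Variable R : realType.
Variable d : nat.
Local Notation V := (vec R d).
Local Notation M := (fmeas R d).

Definition F (a : R) (x y : V) := powR (Lambda x y) a.

Lemma sum_mass (mu : M) (S : seq V) (G : V -> R) : uniq S ->
  (forall p, p \in mu -> p.1 \in S) ->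
  \sum_(p <- mu) p.2 * G p.1 = \sum_(z <- S) mass mu z * G z.
Proof.
move=> uS cov; rewrite /mass.
under [RHS]eq_bigr do rewrite mulr_suml big_mkcond /=.
rewrite exchange_big /=; apply: eq_big_seq => p pin.
rewrite (bigD1_seq p.1) ?cov //= eqxx big1 ?addr0 // => z zn.
by rewrite eq_sym (negbTE zn).
Qed.

Lemma energy_cover (a : R) (mu : M) (S : seq V) : uniq S ->
  (forall p, p \in mu -> p.1 \in S) ->
  energy a mu = 2^-1 * \sum_(z <- S) \sum_(w <- S) mass mu z * mass mu w * F a z w.
Proof.
move=> uS cov; rewrite /energy; congr (_ * _).
transitivity (\sum_(p <- mu) \sum_(w <- S) mass mu w * (p.2 * F a p.1 w)).
  apply: eq_bigr => p _.
  rewrite -(sum_mass (fun w => p.2 * F a p.1 w) uS cov).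
  by apply: eq_bigr => q _; rewrite /F; ring.
rewrite exchange_big /= [RHS]exchange_big /=; apply: eq_bigr => w _.
transitivity (\sum_(p <- mu) p.2 * (mass mu w * F a p.1 w)).
  by apply: eq_bigr => p _; ring.
rewrite (sum_mass (fun z => mass mu w * F a z w) uS cov).
by apply: eq_bigr => z _; ring.
Qed.

Definition cover (mu nu : M) := undup (map fst mu ++ map fst nu).

Lemma cover_uniq mu nu : uniq (cover mu nu).
Proof. exact: undup_uniq. Qed.

Lemma cover_l mu nu p : p \in mu -> p.1 \in cover mu nu.
Proof. by move=> h; rewrite mem_undup mem_cat (map_f fst h). Qed.

Lemma cover_r mu nu p : p \in nu -> p.1 \in cover mu nu.
Proof. by move=> h; rewrite mem_undup mem_cat (map_f fst h) orbT. Qed.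

Lemma same_energy (a : R) (mu nu : M) : same_measure mu nu -> energy a mu = energy a nu.
Proof.
move=> h; rewrite (energy_cover a (cover_uniq mu nu) (@cover_l mu nu)).
rewrite (energy_cover a (cover_uniq mu nu) (@cover_r mu nu)).
by congr (_ * _); apply: eq_bigr => z _; apply: eq_bigr => w _; rewrite !h.
Qed.

Lemma total_cover (mu : M) (S : seq V) : uniq S ->
  (forall p, p \in mu -> p.1 \in S) ->
  \sum_(p <- mu) p.2 = \sum_(z <- S) mass mu z.
Proof.
move=> uS cov; have := sum_mass (fun _ => 1) uS cov.
by under eq_bigr do rewrite mulr1; under [in X in _ = X -> _]eq_bigr do rewrite mulr1.
Qed.

Lemma same_total (mu nu : M) : same_measure mu nu ->
  \sum_(p <- mu) p.2 = \sum_(p <- nu) p.2.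
Proof.
move=> h; rewrite (total_cover (cover_uniq mu nu) (@cover_l mu nu)).
rewrite (total_cover (cover_uniq mu nu) (@cover_r mu nu)).
by apply: eq_bigr => z _; rewrite h.
Qed.

Lemma same_Pfin (mu nu : M) : same_measure mu nu -> in_Pfin nu -> in_Pfin mu.
Proof.
move=> h [h1 [h2 h3]]; split; [|split].
- by move=> x; rewrite h.
- by move=> x; rewrite h; apply: h2.
- by rewrite (same_total h).
Qed.

Lemma same_sym (mu nu : M) : same_measure mu nu -> same_measure nu mu.
Proof. by move=> h x; rewrite h. Qed.

Lemma same_trans (mu nu la : M) : same_measure mu nu -> same_measure nu la -> same_measure mu la.
Proof. by move=> h1 h2 x; rewrite h1 h2. Qed.

Definition supp (mu : M) := undup (map fst mu).

Lemma supp_uniq mu : uniq (supp mu).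
Proof. exact: undup_uniq. Qed.

Lemma supp_cov mu p : p \in mu -> p.1 \in supp mu.
Proof. by move=> h; rewrite mem_undup (map_f fst h). Qed.

Lemma energy_diff (a : R) (mu : M) (S : seq V) : uniq S ->
  (forall p, p \in mu -> p.1 \in S) ->
  energy 1 mu - energy a mu =
  2^-1 * \sum_(z <- S) \sum_(w <- S) mass mu z * mass mu w * (F 1 z w - F a z w).
Proof.
move=> uS cov; rewrite (energy_cover 1 uS cov) (energy_cover a uS cov) -mulrBr -sumrB.
by congr (_ * _); apply: eq_bigr => z _; rewrite -sumrB; apply: eq_bigr => w _; ring.
Qed.

Lemma term_bounds (a : R) (mu : M) z w : in_Pfin mu -> 1 <= a ->
  0 <= mass mu z * mass mu w * (F 1 z w - F a z w) <= mass mu z * mass mu w * (a - 1).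
Proof.
move=> [h1 [h2 _]] a1.
have [e|nz] := eqVneq (mass mu z) 0; first by rewrite e !mul0r lexx.
have [e|nw] := eqVneq (mass mu w) 0; first by rewrite e mulr0 !mul0r lexx.
have hz := h2 _ nz; have hw := h2 _ nw.
have lb := Lambda_bounds hz hw.
have mm : 0 <= mass mu z * mass mu w by rewrite mulr_ge0.
rewrite /F powRr1; last by case/andP: lb.
rewrite mulr_ge0 ?subr_ge0 ?powR_le_id //= ler_wpM2l //.
exact: powR_gap.
Qed.

Lemma Pfin_sum1 (mu : M) : in_Pfin mu -> \sum_(z <- supp mu) mass mu z = 1.
Proof. by case=> _ [_ h]; rewrite -(total_cover (supp_uniq mu) (@supp_cov mu)). Qed.

Lemma Pfin_Ea_le (a : R) (mu : M) : in_Pfin mu -> 1 <= a -> energy a mu <= energy 1 mu.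
Proof.
move=> hP a1; rewrite -subr_ge0 (energy_diff a (supp_uniq mu) (@supp_cov mu)).
rewrite mulr_ge0 // ?invr_ge0 ?ler0n //.
apply: sumr_ge0 => z _; apply: sumr_ge0 => w _.
by case/andP: (term_bounds z w hP a1).
Qed.

Lemma Pfin_gap (a : R) (mu : M) : in_Pfin mu -> 1 <= a ->
  energy 1 mu - energy a mu <= 2^-1 * (a - 1).
Proof.
move=> hP a1; rewrite (energy_diff a (supp_uniq mu) (@supp_cov mu)).
rewrite ler_wpM2l ?invr_ge0 ?ler0n //.
apply: (@le_trans _ _ (\sum_(z <- supp mu) \sum_(w <- supp mu) mass mu z * mass mu w * (a - 1))).
  apply: ler_sum => z _; apply: ler_sum => w _.
  by case/andP: (term_bounds z w hP a1).
have -> : \sum_(z <- supp mu) \sum_(w <- supp mu) mass mu z * mass mu w * (a - 1) =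
   (\sum_(z <- supp mu) mass mu z) * (\sum_(w <- supp mu) mass mu w) * (a - 1).
  rewrite mulr_suml mulr_suml; apply: eq_bigr => z _; rewrite mulr_sumr mulr_suml; apply: eq_bigr => w _; ring.
by rewrite Pfin_sum1 // !mul1r.
Qed.

End En.

Section Emp.
Variable R : realType.
Variable d : nat.
Local Notation V := (vec R d).
Local Notation M := (fmeas R d).

Lemma sum_emp N (y : 'I_N -> V) (c : R) (G : V * R -> R) :
  \sum_(p <- [seq (y i, c) | i <- enum 'I_N]) G p = \sum_(i < N) G (y i, c).
Proof. by rewrite big_map big_enum. Qed.

Lemma mass_emp N (y : 'I_N -> V) z :
  mass (empirical y) z = \sum_(i < N | y i == z) N%:R^-1.
Proof. by rewrite /mass /empirical big_map big_enum_cond. Qed.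

Lemma energy_emp (a : R) N (y : 'I_N -> V) :
  energy a (empirical y) =
  2^-1 * \sum_(i < N) \sum_(k < N) N%:R^-1 * N%:R^-1 * F a (y i) (y k).
Proof.
rewrite /energy /empirical sum_emp; congr (_ * _); apply: eq_bigr => i _.
by rewrite sum_emp.
Qed.

Lemma emp_Pfin N (y : 'I_N -> V) : (0 < N)%N -> (forall i, on_sphere (y i)) ->
  in_Pfin (empirical y).
Proof.
move=> N0 hy; split; [|split].
- by move=> z; rewrite mass_emp; apply: sumr_ge0 => i _; rewrite invr_ge0 ler0n.
- move=> z; rewrite mass_emp.
  have [i /eqP <- _|h] := pickP (fun i => y i == z); first exact: hy.
  by rewrite big_pred0 ?eqxx.
- rewrite /empirical sum_emp /= sumr_const cardT size_enum_ord -[_ *+ N]mulr_natr mulVf //.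
  by rewrite pnatr_eq0 -lt0n.
Qed.

Lemma PN_Pfin N (mu : M) : (0 < N)%N -> in_PN N mu -> in_Pfin mu.
Proof. by move=> N0 [y [hy hs]]; apply: (same_Pfin hs); apply: emp_Pfin. Qed.

Lemma onb_sphere (v : 'I_d.+1 -> V) j : orthonormal_basis v -> on_sphere (v j).
Proof. by move=> h; rewrite /on_sphere h eqxx. Qed.

Lemma pm_sphere (v : 'I_d.+1 -> V) j x : orthonormal_basis v ->
  (x = v j \/ x = - v j) -> on_sphere x.
Proof. by move=> h [->|->]; [|apply: sphereN]; apply: onb_sphere. Qed.

Lemma dot_pm (v : 'I_d.+1 -> V) j k x y : orthonormal_basis v ->
  (x = v j \/ x = - v j) -> (y = v k \/ y = - v k) ->
  dot x y = (j == k)%:R \/ dot x y = - (j == k)%:R.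
Proof.
move=> h [->|->] [->|->]; rewrite ?dotNl ?dotNr ?opprK h; by [left|right].
Qed.

Lemma F_pm (a : R) (v : 'I_d.+1 -> V) j k x y : orthonormal_basis v ->
  (x = v j \/ x = - v j) -> (y = v k \/ y = - v k) -> 0 < a ->
  F a x y = (j != k)%:R.
Proof.
move=> h hx hy a0; rewrite /F.
have [e|ne] := eqVneq j k.
  have L0 : Lambda x y = 0.
    by case: (dot_pm h hx hy); rewrite e eqxx => hd; [exact: Lambda_dot1 | exact: Lambda_dotN1].
  by rewrite L0 powR0 ?gt_eqF.
have L1 : Lambda x y = 1.
  by case: (dot_pm h hx hy); rewrite (negbTE ne) ?oppr0 => hd; exact: Lambda_dot0.
by rewrite L1 powR1.
Qed.

Lemma energy_cross_emp (a : R) N (v : 'I_d.+1 -> V) (kap : 'I_N -> 'I_d.+1) (x : 'I_N -> V) :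
  orthonormal_basis v -> (forall i, x i = v (kap i) \/ x i = - v (kap i)) -> 0 < a ->
  energy a (empirical x) =
  2^-1 * \sum_(i < N) \sum_(k < N) N%:R^-1 * N%:R^-1 * (kap i != kap k)%:R.
Proof.
move=> h hx a0; rewrite energy_emp; congr (_ * _); apply: eq_bigr => i _.
by apply: eq_bigr => k _; rewrite (F_pm h (hx i) (hx k) a0).
Qed.

Lemma sum_cross (v : 'I_d.+1 -> V) (A B : 'I_d.+1 -> R) (G : V * R -> R) :
  \sum_(p <- cross_combination v A B) G p = \sum_(i < d.+1) (G (v i, A i) + G (- v i, B i)).
Proof.
rewrite /cross_combination big_flatten big_map big_enum /=.
by apply: eq_bigr => i _; rewrite !big_cons big_nil addr0.
Qed.

Lemma mass_cross (v : 'I_d.+1 -> V) (A B : 'I_d.+1 -> R) x :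
  mass (cross_combination v A B) x =
  \sum_(i < d.+1) ((v i == x)%:R * A i + (- v i == x)%:R * B i).
Proof.
rewrite /mass /cross_combination big_flatten big_map big_enum /=.
apply: eq_bigr => i _; rewrite !big_cons big_nil /=.
by case: (v i == x); case: (- v i == x); rewrite ?mul1r ?mul0r ?addr0 ?add0r.
Qed.

Lemma total_cross (v : 'I_d.+1 -> V) (A B : 'I_d.+1 -> R) :
  \sum_(p <- cross_combination v A B) p.2 = \sum_(i < d.+1) (A i + B i).
Proof. by rewrite (sum_cross v A B (fun p => p.2)). Qed.

Lemma energy_cross (a : R) (v : 'I_d.+1 -> V) (A B : 'I_d.+1 -> R) :
  orthonormal_basis v -> 0 < a ->
  energy a (cross_combination v A B) =
  2^-1 * \sum_(i < d.+1) \sum_(j < d.+1) (A i + B i) * (A j + B j) * (i != j)%:R.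
Proof.
move=> h a0; rewrite /energy sum_cross; congr (_ * _); apply: eq_bigr => i _.
rewrite !sum_cross -big_split /=; apply: eq_bigr => j _ /=.
have p1 : forall l : 'I_d.+1, v l = v l \/ v l = - v l by left.
have p2 : forall l : 'I_d.+1, - v l = v l \/ - v l = - v l by right.
rewrite -!/(F _ _ _). rewrite (F_pm h (p1 i) (p1 j) a0) (F_pm h (p1 i) (p2 j) a0).
rewrite (F_pm h (p2 i) (p1 j) a0) (F_pm h (p2 i) (p2 j) a0); ring.
Qed.

Lemma cross_Pfin (v : 'I_d.+1 -> V) (A B : 'I_d.+1 -> R) :
  orthonormal_basis v ->
  (forall i, 0 <= A i /\ 0 <= B i /\ A i + B i = (d.+1)%:R^-1) ->
  in_Pfin (cross_combination v A B).
Proof.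
move=> h hab; split; [|split].
- move=> x; rewrite mass_cross; apply: sumr_ge0 => i _.
  by case: (hab i) => [a0 [b0 _]]; rewrite addr_ge0 // mulr_ge0 // ler0n.
- move=> x; rewrite mass_cross => hm.
  case: (boolP [exists i, (v i == x) || (- v i == x)]).
    move=> /existsP[i /orP[/eqP <-|/eqP <-]]; first exact: onb_sphere.
    by apply: sphereN; apply: onb_sphere.
  rewrite negb_exists => /forallP hn; move: hm; rewrite big1 ?eqxx // => i _.
  by have := hn i; rewrite negb_or => /andP[/negbTE -> /negbTE ->]; rewrite !mul0r addr0.
- rewrite total_cross (eq_bigr (fun _ => (d.+1)%:R^-1)); last by move=> i _; case: (hab i) => _ [].
  by rewrite sumr_const cardT size_enum_ord -[_ *+ d.+1]mulr_natr mulVf // pnatr_eq0.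
Qed.

End Emp.

Section Struct.
Variable R : realType.
Variable d : nat.
Local Notation V := (vec R d).

Definition orthseq (us : seq V) := uniq us /\ (forall u, u \in us -> on_sphere u) /\
  (forall u w, u \in us -> w \in us -> u != w -> dot u w = 0).

Definition trip (z w : V) := dot z w = 0 \/ dot z w = 1 \/ dot z w = -1.

Lemma struct_seq (s : seq V) : (forall z, z \in s -> on_sphere z) ->
  (forall z w, z \in s -> w \in s -> trip z w) ->
  exists us, orthseq us /\ {subset us <= s} /\
    forall z, z \in s -> exists u, u \in us /\ (z = u \/ z = - u).
Proof.
elim: s => [|z s IH] hs ht.
  by exists [::]; split; [split; [|split]|split].
have hs' : forall z, z \in s -> on_sphere z by move=> y yi; apply: hs; rewrite inE yi orbT.
have ht' : forall z w, z \in s -> w \in s -> trip z w.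
  by move=> y w yi wi; apply: ht; rewrite inE ?yi ?wi orbT.
have zs : z \in z :: s by rewrite inE eqxx.
case: (IH hs' ht') => us [[uu [uo ud]] [usub ucov]].
case: (boolP (has (fun u => dot z u != 0) us)).
  move=> /hasP[u ui nz]; exists us; split; first by split.
  split; first by move=> y yi; rewrite inE (usub _ yi) orbT.
  move=> y; rewrite inE => /orP[/eqP ->|yi]; last exact: ucov.
  exists u; split => //.
  have uis : u \in z :: s by rewrite inE (usub _ ui) orbT.
  case: (ht _ _ zs uis) => [e|[e|e]]; first by move: nz; rewrite e eqxx.
    by left; apply: dot_eq1 => //; [apply: hs | apply: uo].
  right; have := dot_eqN1 (hs _ zs) (uo _ ui) e; move=> ->; by rewrite opprK.
rewrite -all_predC => /allP hall.
have hz0 : forall u, u \in us -> dot z u = 0.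
  by move=> u ui; have := hall u ui; rewrite /= negbK => /eqP.
have znu : z \notin us.
  apply/negP => zi; have := hz0 z zi; rewrite (hs _ zs) => /eqP; by rewrite oner_eq0.
exists (z :: us); split; [split; [|split]|split].
- by rewrite /= znu uu.
- by move=> u; rewrite inE => /orP[/eqP ->|ui]; [apply: hs | apply: uo].
- move=> u w; rewrite !inE => /orP[/eqP ->|ui] /orP[/eqP ->|wi]; rewrite ?eqxx //.
  + by move=> _; apply: hz0.
  + by move=> _; rewrite dotC; apply: hz0.
  + exact: ud.
- by move=> y; rewrite inE => /orP[/eqP ->|yi]; rewrite inE ?eqxx ?(usub _ yi) ?orbT.
- move=> y; rewrite inE => /orP[/eqP ->|yi].
    by exists z; split; [rewrite inE eqxx | left].
  case: (ucov _ yi) => u [ui e]; exists u; split => //; by rewrite inE ui orbT.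
Qed.

Definition umx (us : seq V) : 'M[R]_(size us, d.+1) := \matrix_(i, k) (nth 0 us i) 0 k.

Lemma umx_dot (us : seq V) (w : V) j : (w *m (umx us)^T) 0 j = dot w (nth 0 us j).
Proof. by rewrite !mxE; apply: eq_bigr => k _; rewrite !mxE. Qed.

Lemma orth_nth (us : seq V) (i j : nat) : orthseq us -> (i < size us)%N -> (j < size us)%N ->
  dot (nth 0 us i) (nth 0 us j) = (i == j)%:R.
Proof.
move=> [uu [uo ud]] hi hj; have [e|ne] := eqVneq i j.
  by rewrite e; apply: uo; rewrite mem_nth.
apply: ud; rewrite ?mem_nth //.
by rewrite nth_uniq // ne.
Qed.

Lemma orth_size (us : seq V) : orthseq us -> (size us <= d.+1)%N.
Proof.
move=> ho; set U := umx us.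
have e : U *m U^T = 1%:M.
  apply/matrixP => i j; rewrite !mxE; rewrite -(orth_nth ho (ltn_ord i) (ltn_ord j)).
  by apply: eq_bigr => k _; rewrite !mxE.
have := mxrankM_maxl U U^T; rewrite e mxrank1 => h.
exact: leq_trans h (rank_leq_col U).
Qed.

Lemma orth_extend (us : seq V) : orthseq us -> (size us < d.+1)%N ->
  exists w, on_sphere w /\ forall u, u \in us -> dot w u = 0.
Proof.
move=> ho hs; set U := umx us; set K := kermx U^T.
have rK : (0 < \rank K)%N.
  rewrite /K mxrank_ker mxrank_tr subn_gt0.
  exact: leq_ltn_trans (rank_leq_row U) hs.
have [i ni] : exists i, row i K != 0.
  apply/existsP; rewrite -negb_forall; apply/negP => /forallP h.
  move: rK; rewrite lt0n mxrank_eq0 => /negP; apply; apply/eqP/row_matrixP => i.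
  by rewrite row0; apply/eqP; exact: h.
set w0 := row i K.
have hw0 : forall u, u \in us -> dot w0 u = 0.
  move=> u ui; rewrite -(nth_index 0 ui).
  rewrite -index_mem in ui.
  rewrite -(umx_dot w0 (Ordinal ui)) /w0 -row_mul mulmx_ker row0 mxE //.
have p0 : 0 < dot w0 w0.
  rewrite lt_neqAle dot_ge0 andbT eq_sym; apply/negP => /eqP /dot_eq0 e.
  by move: ni; rewrite -/w0 e eqxx.
set c := (Num.sqrt (dot w0 w0))^-1.
exists (c *: w0); split.
  rewrite /on_sphere dotZl dotC dotZl mulrA -expr2 /c exprVn sqr_sqrtr ?ltW //.
  by rewrite mulVf // gt_eqF.
by move=> u ui; rewrite dotZl hw0 // mulr0.
Qed.

Lemma orth_full (us : seq V) : orthseq us ->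
  exists us', orthseq us' /\ size us' = d.+1 /\ {subset us <= us'}.
Proof.
move Hn : (d.+1 - size us)%N => n.
elim: n us Hn => [|n IH] us Hn ho.
  exists us; split => //; split => //.
  by apply/eqP; rewrite eqn_leq orth_size // /= -subn_eq0 Hn.
have hs : (size us < d.+1)%N by rewrite -subn_gt0 Hn.
case: (orth_extend ho hs) => w [wo wd].
have wn : w \notin us.
  by apply/negP => wi; have := wd w wi; rewrite wo => /eqP; rewrite oner_eq0.
have ho' : orthseq (w :: us).
  case: ho => [uu [uo ud]]; split; [|split].
  - by rewrite /= wn uu.
  - by move=> u; rewrite inE => /orP[/eqP ->|ui]; [|apply: uo].
  - move=> u y; rewrite !inE => /orP[/eqP ->|ui] /orP[/eqP ->|yi]; rewrite ?eqxx //.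
    + by move=> _; apply: wd.
    + by move=> _; rewrite dotC; apply: wd.
    + exact: ud.
have Hn' : (d.+1 - size (w :: us))%N = n.
  by rewrite /= subnS Hn.
have [us2 [hh2 [hs2 sub2]]] := IH _ Hn' ho'.
exists us2; split => //; split => // u ui; apply: sub2; by rewrite inE ui orbT.
Qed.

Lemma structure (s : seq V) : (forall z, z \in s -> on_sphere z) ->
  (forall z w, z \in s -> w \in s -> trip z w) ->
  exists v : 'I_d.+1 -> V, orthonormal_basis v /\
    forall z, z \in s -> exists j, z = v j \/ z = - v j.
Proof.
move=> hs ht; case: (struct_seq hs ht) => us [ho [_ hcov]].
case: (orth_full ho) => us' [ho' [hsz hsub]].
exists (fun j => nth 0 us' j); split.
  move=> j k; rewrite (orth_nth ho') ?hsz //.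
move=> z zi; case: (hcov z zi) => u [ui e].
have ui' := hsub u ui; have hi : (index u us' < d.+1)%N by move: ui'; rewrite -index_mem hsz.
by exists (Ordinal hi); rewrite /= nth_index.
Qed.

End Struct.

Local Close Scope ring_scope.

Section Comb.

Definition cnt (T K : finType) (f : T -> K) (k : K) : nat := \sum_(i | f i == k) 1.

Lemma count_map_cnt n (K : finType) (f : 'I_n -> K) (P : pred K) :
  count P [seq f i | i <- enum 'I_n] = \sum_(k | P k) cnt f k.
Proof.
rewrite -sum1_count big_map big_enum_cond /=.
rewrite (partition_big f P) //=; apply: eq_bigr => k Pk.
by apply: eq_bigl => i; case: (f i =P k) => [->|_]; rewrite ?Pk ?andbF.
Qed.

Lemma perm_fib n (K : finType) (f g : 'I_n -> K) :
  (forall k, cnt f k = cnt g k) -> exists s : {perm 'I_n}, forall i, f i = g (s i).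
Proof.
move=> h.
have pe : perm_eq [tuple f i | i < n] [tuple g i | i < n].
  apply/seq.permP => P.
  rewrite -(map_tnth_enum [tuple f i | i < n]) -(map_tnth_enum [tuple g i | i < n]).
  rewrite (eq_map (tnth_mktuple f)) (eq_map (tnth_mktuple g)) !count_map_cnt.
  by apply: eq_bigr => k _; apply: h.
case/tuple_permP: pe => p E; exists p => i.
have := congr1 (fun s => nth (f i) s i) E.
by rewrite !nth_mktuple tnth_mktuple.
Qed.

Lemma sum_cnt (T K : finType) (f : T -> K) : \sum_k cnt f k = #|T|.
Proof.
rewrite -sum1_card (partition_big f predT) //=.
Qed.

Lemma sum_sq (T K : finType) (f : T -> K) :
  \sum_i \sum_k (f i == f k : nat) = \sum_j cnt f j * cnt f j.
Proof.
transitivity (\sum_i cnt f (f i)).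
  apply: eq_bigr => i _; rewrite /cnt [RHS]big_mkcond /=; apply: eq_bigr => k _.
  by rewrite eq_sym; case: (f k == f i).
rewrite (partition_big f predT) //=; apply: eq_bigr => j _.
transitivity (\sum_(i | f i == j) (1 * cnt f j)).
  by apply: eq_bigr => i /eqP ->; rewrite mul1n.
by rewrite -big_distrl.
Qed.

Lemma balance m (n c : 'I_m -> nat) (q : nat) :
  \sum_j n j = \sum_j c j -> \sum_j n j * n j <= \sum_j c j * c j ->
  (forall j, c j = q \/ c j = q + 1) -> forall j, n j = q \/ n j = q + 1.
Proof.
move=> hs hq hc.
have ge : forall x, (2 * q + 1) * x <= x * x + q * (q + 1).
  move=> x; case: (leqP x q) => h.
    have h1 : 0 <= (q - x) * (q + 1 - x) by []. nia.
  have h1 : 0 <= (x - q) * (x - q - 1) by []. nia.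
have eqc : forall j, c j * c j + q * (q + 1) = (2 * q + 1) * c j.
  by move=> j; case: (hc j) => ->; nia.
have S1 : \sum_j (n j * n j + q * (q + 1)) <= \sum_j ((2 * q + 1) * n j).
  rewrite big_split /= (_ : \sum_j (2 * q + 1) * n j = (2 * q + 1) * \sum_j n j); last first.
    by rewrite big_distrr.
  rewrite hs big_distrr /=.
  apply: (@leq_trans (\sum_j c j * c j + \sum_(j < m) q * (q + 1))).
    by rewrite leq_add2r.
  rewrite -big_split /=; apply: eq_leq; apply: eq_bigr => j _.
  exact: eqc.
move=> j.
have E : n j * n j + q * (q + 1) = (2 * q + 1) * n j.
  apply/eqP; rewrite eqn_leq ge andbT; apply/negPn/negP; rewrite -ltnNge => lt.
  move: S1; apply/negP; rewrite -ltnNge.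
  rewrite (bigD1 j) //= [X in (_ < X)%N](bigD1 j) //=.
  set A := \sum_(i < m | i != j) (2 * q + 1) * n i.
  set B := \sum_(i < m | i != j) (n i * n i + q * (q + 1)).
  have AB : A <= B by apply: leq_sum => i _; apply: ge.
  by apply: (leq_trans (_ : _ < n j * n j + q * (q + 1) + A)); [rewrite ltn_add2r | rewrite leq_add2l].
nia.
Qed.

Lemma t3 (N m j : nat) : 0 < m -> j < m -> N %/ m + (j < N %% m) + (N %% m == j) = N.+1 %/ m + (j < N.+1 %% m).
Proof. move=> h1 h2. nia. Qed.

Lemma modidx_eq d N (i : 'I_N) (j : 'I_d.+1) : (modidx d i == j) = (i %% d.+1 == j)%N.
Proof. by rewrite /modidx -val_eqE /= inordK // ltn_pmod. Qed.

Lemma cnt_mod d N (j : 'I_d.+1) :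
  cnt (@modidx d N) j = (N %/ d.+1 + (j < N %% d.+1))%N.
Proof.
rewrite /cnt (eq_bigl (fun i : 'I_N => (i %% d.+1 == j)%N)); last by move=> i; rewrite modidx_eq.
rewrite -(big_mkord (fun i => (i %% d.+1 == j)%N) (fun _ => 1)).
have hj := ltn_ord j.
elim: N => [|N IH]; first by rewrite big_geq // div0n mod0n.
rewrite big_mkcond big_nat_recr //= -big_mkcond IH.
rewrite -t3 //; by case: (N %% d.+1 == j)%N.
Qed.

Lemma balance_perm m (n c : 'I_m -> nat) (q : nat) :
  (forall j, n j = q \/ n j = q + 1) -> (forall j, c j = q \/ c j = q + 1) ->
  \sum_j n j = \sum_j c j -> exists p : {perm 'I_m}, forall j, c j = n (p j).
Proof.
move=> hn hc hs.
have dec : forall (f : 'I_m -> nat), (forall j, f j = q \/ f j = q + 1) ->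
    forall j, f j = q + (f j == q + 1).
  by move=> f hf j; case: (hf j) => ->; rewrite ?eqxx // ltn_eqF ?addn0 // addn1.
have sb : forall (f : 'I_m -> nat), (forall j, f j = q \/ f j = q + 1) ->
    \sum_j f j = m * q + cnt (fun j => f j == q + 1) true.
  move=> f hf; rewrite (eq_bigr _ (fun j _ => dec f hf j)) big_split /= sum_nat_const card_ord.
  congr (_ + _); rewrite /cnt [RHS]big_mkcond /=; apply: eq_bigr => j _.
  by case: (f j == q + 1).
have ct : cnt (fun j => n j == q + 1) true = cnt (fun j => c j == q + 1) true.
  by have := hs; rewrite (sb n hn) (sb c hc) => /eqP; rewrite eqn_add2l => /eqP.
have cf : forall (f : 'I_m -> bool), cnt f true + cnt f false = m.
  by move=> f; have := sum_cnt f; rewrite big_bool card_ord.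
have [p hp] : exists p : {perm 'I_m}, forall j, (c j == q + 1) = (n (p j) == q + 1).
  apply: (@perm_fib m bool (fun j => c j == q + 1) (fun j => n j == q + 1)) => -[] //.
  have h1 := cf (fun j => n j == q + 1); have h2 := cf (fun j => c j == q + 1); rewrite ct in h1.
  apply: (@addnI (cnt (fun j => c j == q + 1) true)); rewrite h2; exact: esym h1.
by exists p => j; rewrite (dec c hc) (dec n hn (p j)) hp.
Qed.

End Comb.

Local Open Scope ring_scope.

Section Main.
Variable R : realType.
Variable d : nat.
Local Notation V := (vec R d).
Local Notation M := (fmeas R d).

Definition ebase (j : 'I_d.+1) : V := \row_k (k == j)%:R.

Lemma ebase_onb : orthonormal_basis ebase.
Proof.
move=> j k; rewrite /dot (bigD1 j) //= big1 => [|l lj]; rewrite !mxE ?eqxx.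
  by rewrite mul1r addr0 eq_sym.
by rewrite (negbTE lj) mul0r.
Qed.

Lemma cross_inPN N (mu : M) : cross_config N mu -> in_PN N mu.
Proof. by case=> v [x [hv [hx [_ hs]]]]; exists x. Qed.

Lemma cross_const N (a : R) (mu : M) : cross_config N mu -> 0 < a ->
  energy a mu = energy 1 mu.
Proof.
case=> v [x [hv [hx [hk hs]]]] a0.
rewrite !(same_energy _ hs) (energy_cross_emp hv hk a0) (energy_cross_emp hv hk ltr01) //.
Qed.

Lemma crossfin_Pfin (mu : M) : cross_fin mu -> in_Pfin mu.
Proof. by case=> v [A [B [hv [hab hs]]]]; apply: (same_Pfin hs); apply: cross_Pfin. Qed.

Lemma crossfin_const (a : R) (mu : M) : cross_fin mu -> 0 < a ->
  energy a mu = energy 1 mu.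
Proof.
case=> v [A [B [hv [hab hs]]]] a0.
by rewrite !(same_energy _ hs) (energy_cross _ _ hv a0) (energy_cross _ _ hv ltr01).
Qed.

Lemma trip_of (a : R) (x y : V) : on_sphere x -> on_sphere y -> 1 < a ->
  F 1 x y = F a x y -> trip x y.
Proof.
move=> hx hy a1; have lb := Lambda_bounds hx hy.
rewrite /F powRr1; last by case/andP: lb.
move=> e; case: (powR_eq_id lb a1 (esym e)) => h.
  by case: (Lambda_0 hx hy h) => h'; right; [left|right].
by left; apply: Lambda_1.
Qed.

Lemma onb_inj (v : 'I_d.+1 -> V) i j : orthonormal_basis v -> (v i == v j) = (i == j).
Proof.
move=> hv; apply/eqP/eqP => [e|->//].
have := hv i j; rewrite e hv eqxx; case: (i =P j) => // _ /eqP.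
by rewrite oner_eq0.
Qed.

End Main.

Section Max1.
Variable R : realType.
Variable d : nat.
Local Notation V := (vec R d).
Local Notation M := (fmeas R d).

Lemma sum_neq_eq (T K : finType) (f : T -> K) :
  ((\sum_i \sum_k (f i == f k : nat)) + (\sum_i \sum_k (f i != f k : nat)) =
   (\sum_(i : T) 1) * (\sum_(i : T) 1))%N.
Proof.
rewrite -big_split /= big_distrl /=; apply: eq_bigr => i _.
rewrite -big_split /= mul1n; apply: eq_bigr => k _.
by case: (f i == f k).
Qed.

Lemma nested_eq0 N (G : 'I_N -> 'I_N -> R) :
  (forall i k, 0 <= G i k) -> \sum_i \sum_k G i k = 0 -> forall i k, G i k = 0.
Proof.
move=> hG hs i k.
have h1 : forall i, true -> 0 <= \sum_k G i k by move=> i' _; apply: sumr_ge0.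
have := @psumr_eq0P _ _ _ _ h1 hs i isT => hi.
have h2 : forall k, true -> 0 <= G i k by move=> k' _.
exact: (@psumr_eq0P _ _ _ _ h2 hi k isT).
Qed.

Lemma max_to_cross (a : R) N (mu : M) : 1 < a -> (0 < N)%N -> C1 R d ->
  maximizes (in_PN N) (energy a) mu -> cross_config N mu.
Proof.
move=> a1 N0 hC1 [[y [hy hs]] Hle].
have a0 : 0 < a by apply: lt_trans a1.
have Nn : (N%:R : R) != 0 by rewrite pnatr_eq0 -lt0n.
pose xs (i : 'I_N) := ebase R (modidx d i).
have hcs : cross_config N (empirical xs).
  exists (@ebase R d), xs; split; first exact: (@ebase_onb R d).
  split; first by move=> i; apply: onb_sphere; apply: (@ebase_onb R d).
  by split => // i; left.
have hPNs := cross_inPN hcs.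
have [_ hmax1] := hC1 N N0 _ hcs.
have e1 := hmax1 mu (ex_intro _ y (conj hy hs)).
have e2 := Hle _ hPNs.
have e3 := Pfin_Ea_le (PN_Pfin N0 (ex_intro _ y (conj hy hs))) (ltW a1).
have e4 := cross_const hcs a0.
have E1a : energy 1 mu = energy a mu by lra.
have E11 : energy 1 mu = energy 1 (empirical xs) by lra.
rewrite !(same_energy _ hs) in E1a E11.
have hz : forall i k, N%:R^-1 * N%:R^-1 * (F 1 (y i) (y k) - F a (y i) (y k)) = 0.
  apply: nested_eq0.
    move=> i k; rewrite mulr_ge0 ?mulr_ge0 ?invr_ge0 ?ler0n // subr_ge0.
    have lb := Lambda_bounds (hy i) (hy k).
    rewrite /F powRr1; last by case/andP: lb.
    exact: powR_le_id (ltW a1).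
  move: E1a; rewrite !energy_emp => /eqP; rewrite -subr_eq0 -mulrBr mulf_eq0 invr_eq0 pnatr_eq0 /=.
  rewrite -sumrB => /eqP e; rewrite -[RHS]e; apply: eq_bigr => i _.
  by rewrite -sumrB; apply: eq_bigr => k _; rewrite mulrBr.
have htrip : forall i k, trip (y i) (y k).
  move=> i k; apply: (trip_of (hy i) (hy k) a1); apply/eqP; rewrite -subr_eq0.
  have := hz i k; move/eqP; rewrite mulf_eq0 mulf_eq0 invr_eq0 (negbTE Nn) /=.
  by [].
pose s := [seq y i | i <- enum 'I_N].
have [v [hv hcov]] : exists v : 'I_d.+1 -> V, orthonormal_basis v /\
    forall z, z \in s -> exists j, z = v j \/ z = - v j.
  apply: structure.
    by move=> z /mapP[i _ ->].
  by move=> z w /mapP[i _ ->] /mapP[k _ ->].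
have hex : forall i, exists j, y i = v j \/ y i = - v j.
  by move=> i; apply: hcov; apply: map_f; rewrite mem_enum.
have [kap hk] := boolp.choice hex.
have Eq : (\sum_(i < N) \sum_(k < N) (kap i != kap k : nat) = \sum_(i < N) \sum_(k < N) (modidx d i != modidx d k : nat))%N.
  move: E11; rewrite (energy_cross_emp hv hk ltr01).
  have hxs : forall i, xs i = ebase R (modidx d i) \/ xs i = - ebase R (modidx d i) by left.
  rewrite (energy_cross_emp (@ebase_onb R d) hxs ltr01).
  have h2 : (2^-1 : R) != 0 by rewrite invr_eq0 pnatr_eq0.
  move=> /(mulfI h2) E.
  have E' : forall (f : 'I_N -> 'I_d.+1),
      \sum_i \sum_k N%:R^-1 * N%:R^-1 * (f i != f k)%:R =
      N%:R^-1 * N%:R^-1 * ((\sum_i \sum_k (f i != f k : nat))%N)%:R :> R.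
    move=> f; rewrite natr_sum mulr_sumr; apply: eq_bigr => i _.
    by rewrite natr_sum mulr_sumr.
  have cn : (N%:R^-1 * N%:R^-1 : R) != 0 by rewrite mulf_neq0 // invr_eq0.
  by move: E; rewrite !E' => /(mulfI cn)/eqP; rewrite eqr_nat => /eqP.
have Eq2 : (\sum_(i < N) \sum_(k < N) (kap i == kap k : nat) = \sum_(i < N) \sum_(k < N) (modidx d i == modidx d k : nat))%N.
  have h1 := sum_neq_eq kap; have h2 := sum_neq_eq (@modidx d N); rewrite Eq in h1.
  by apply/eqP; rewrite -(eqn_add2r (\sum_(i < N) \sum_(k < N) (modidx d i != modidx d k : nat))) h1 h2.
rewrite !sum_sq in Eq2.
set q := (N %/ d.+1)%N.
have hc : forall j, cnt (@modidx d N) j = q \/ cnt (@modidx d N) j = (q + 1)%N.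
  by move=> j; rewrite cnt_mod; case: (j < N %% d.+1)%N; [right|left; rewrite addn0].
have hsum : (\sum_j cnt kap j = \sum_j cnt (@modidx d N) j)%N by rewrite !sum_cnt.
have hn := balance hsum (eq_leq Eq2) hc.
have [p hp] := balance_perm hn hc hsum.
pose v' j := v (p j).
pose kap' i := (p^-1)%g (kap i).
have hv' : orthonormal_basis v'.
  by move=> j k; rewrite /v' hv (inj_eq (@perm_inj _ p)).
have hck : forall j, cnt (@modidx d N) j = cnt kap' j.
  move=> j; rewrite hp /cnt; apply: eq_bigl => i.
  by rewrite /kap' -(inj_eq (@perm_inj _ p)) permKV.
have [sg hsg] := perm_fib hck.
exists v', (fun i => y (sg i)); split => //; split; first by move=> i; apply: hy.
split.
  move=> i; rewrite hsg /kap' /v' permKV; exact: hk.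
apply: (same_trans hs) => z; rewrite !mass_emp.
by rewrite (reindex_inj (@perm_inj _ sg)).
Qed.

End Max1.

Section Max2.
Variable R : realType.
Variable d : nat.
Local Notation V := (vec R d).
Local Notation M := (fmeas R d).

Lemma mass_supp (mu : M) x : mass mu x != 0 -> x \in supp mu.
Proof.
apply: contraR => hx; rewrite /mass big1_seq // => p /andP[/eqP e pin].
by move: hx; rewrite -e (supp_cov pin).
Qed.

Lemma pair_identity (W : 'I_d.+1 -> R) :
  \sum_i \sum_j W i * W j * (i != j)%:R = (\sum_i W i) ^+ 2 - \sum_i W i ^+ 2.
Proof.
rewrite expr2 mulr_suml -sumrB; apply: eq_bigr => i _.
rewrite mulr_sumr (bigD1 i) //= [X in _ = X - _](bigD1 i) //= eqxx mulr0 add0r.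
rewrite addrAC expr2 subrr add0r; apply: eq_bigr => j ji.
by rewrite eq_sym ji mulr1.
Qed.

Lemma negv_neq (v : 'I_d.+1 -> V) i j : orthonormal_basis v -> (- v i == v j) = false.
Proof.
move=> hv; apply/negP => /eqP e.
have := hv i j; rewrite -(opprK (v i)) e dotNl hv eqxx.
by case: (i == j); rewrite /= ?mulr1n ?mulr0n => h; clear e hv; lra.
Qed.

Lemma max_to_crossfin (a : R) (mu : M) : 1 < a -> C1' R d ->
  maximizes (@in_Pfin R d) (energy a) mu -> cross_fin mu.
Proof.
move=> a1 hC [hP Hle].
have a0 : 0 < a by apply: lt_trans a1.
pose c : R := (d.+1)%:R^-1.
have c0 : 0 <= c by rewrite invr_ge0 ler0n.
pose ms := cross_combination (@ebase R d) (fun _ => c) (fun _ => 0).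
have hcs : cross_fin ms.
  exists (@ebase R d), (fun _ => c), (fun _ => 0); split; first exact: (@ebase_onb R d).
  by split => // i; rewrite addr0 lexx.
have hPs := crossfin_Pfin hcs.
have [_ hmax1] := hC ms hcs.
have e1 := hmax1 mu hP.
have e2 := Hle _ hPs.
have e3 := Pfin_Ea_le hP (ltW a1).
have e4 := crossfin_const hcs a0.
have E1a : energy 1 mu - energy a mu = 0 by lra.
have E11 : energy 1 mu = energy 1 ms by lra.
set S := supp mu.
have hz : forall z w, z \in S -> w \in S ->
    mass mu z * mass mu w * (F 1 z w - F a z w) = 0.
  move: E1a; rewrite (energy_diff a (supp_uniq mu) (@supp_cov _ _ mu)) => /eqP.
  rewrite mulf_eq0 invr_eq0 pnatr_eq0 /= => hs.
  have hi : forall z, true -> 0 <= \sum_(w <- S) mass mu z * mass mu w * (F 1 z w - F a z w).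
    move=> z _; apply: sumr_ge0 => w _.
    by case/andP: (term_bounds z w hP (ltW a1)).
  move: hs; rewrite psumr_eq0 // => /allP ha z w zi wi.
  have := ha z zi; rewrite /= psumr_eq0; last first.
    by move=> w' _; case/andP: (term_bounds z w' hP (ltW a1)).
  by move=> /allP /(_ w wi) /= /eqP.
pose Sp := [seq z <- S | mass mu z != 0].
have hsp : forall z, z \in Sp -> on_sphere z.
  by move=> z; rewrite mem_filter => /andP[nz _]; case: hP => _ [h _]; apply: h.
have [v [hv hcov]] : exists v : 'I_d.+1 -> V, orthonormal_basis v /\
    forall z, z \in Sp -> exists j, z = v j \/ z = - v j.
  apply: structure => // z w zi wi.
  apply: (trip_of (hsp z zi) (hsp w wi) a1).
  move: zi wi; rewrite !mem_filter => /andP[nz zS] /andP[nw wS].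
  have := hz z w zS wS; move/eqP; rewrite !mulf_eq0 (negbTE nz) (negbTE nw) /= subr_eq0.
  by move/eqP.
have key : forall x, mass mu x != 0 -> exists j, x = v j \/ x = - v j.
  by move=> x nx; apply: hcov; rewrite mem_filter nx mass_supp.
pose A j := mass mu (v j).
pose B j := mass mu (- v j).
have hsame : same_measure mu (cross_combination v A B).
  move=> x; rewrite mass_cross.
  case: (boolp.pselect (exists j, x = v j)) => [[j ->]|nA].
    rewrite (bigD1 j) //= big1 => [|i ij].
      by rewrite eqxx negv_neq // mul1r mul0r !addr0.
    by rewrite onb_inj // (negbTE ij) negv_neq // !mul0r addr0.
  case: (boolp.pselect (exists j, x = - v j)) => [[j ->]|nB].
    rewrite (bigD1 j) //= big1 => [|i ij].
      by rewrite eqxx eq_sym negv_neq // mul1r mul0r !add0r addr0.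
    rewrite eq_sym negv_neq // eqr_opp onb_inj // (negbTE ij).
    by rewrite !mul0r addr0.
  rewrite big1 => [|i _].
    case: (eqVneq (mass mu x) 0) => // /key [j [e|e]]; [case: nA | case: nB]; by exists j.
  have -> : (v i == x) = false by apply/negP => /eqP e; apply: nA; exists i.
  have -> : (- v i == x) = false by apply/negP => /eqP e; apply: nB; exists i.
  by rewrite !mul0r addr0.
have hnn : forall i, 0 <= A i /\ 0 <= B i.
  by move=> i; case: hP => h _; split; apply: h.
have tot : \sum_i (A i + B i) = 1.
  by rewrite -(total_cross v) -(same_total hsame); case: hP => _ [_ ->].
have sq : \sum_i (A i + B i) ^+ 2 = c.
  move: E11; rewrite (same_energy _ hsame) (energy_cross _ _ hv ltr01).
  rewrite (energy_cross _ _ (@ebase_onb R d) ltr01).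
  rewrite (pair_identity (fun i => A i + B i)) (pair_identity (fun i => c + 0)).
  rewrite tot !sumr_const card_ord addr0.
  have mc : c *+ d.+1 = 1 by rewrite -mulr_natr mulVf // pnatr_eq0.
  rewrite mc.
  have mc2 : c ^+ 2 *+ d.+1 = c by rewrite expr2 -mulrnAr mc mulr1.
  rewrite mc2 => e; have : (2^-1 : R) != 0 by rewrite invr_eq0 pnatr_eq0.
  by move=> h2; move: (mulfI h2 e) => e'; lra.
have zero : \sum_i (A i + B i - c) ^+ 2 = 0.
  rewrite (eq_bigr (fun i => (A i + B i) ^+ 2 - 2 * c * (A i + B i) + c ^+ 2)); last first.
    by move=> i _; ring.
  rewrite big_split /= sumrB -mulr_sumr sq tot sumr_const card_ord.
  have -> : c ^+ 2 *+ d.+1 = c.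
    by rewrite expr2 -mulrnAr -mulr_natr mulVf ?mulr1 // pnatr_eq0.
  ring.
have each : forall i, A i + B i = c.
  move=> i; have h0 : forall j : 'I_d.+1, true -> 0 <= (A j + B j - c) ^+ 2.
    by move=> j _; rewrite sqr_ge0.
  have := @psumr_eq0P _ _ _ _ h0 zero i isT; move/eqP; rewrite sqrf_eq0 subr_eq0.
  by move/eqP.
exists v, A, B; split => //; split => // i.
by case: (hnn i) => h1 h2; split => //; split => //; rewrite each.
Qed.

End Max2.

Theorem proposition1p3 (R : realType) (d : nat) :
  (C1 R d <-> C2 R d) /\ (C1' R d <-> C2' R d).
Proof.
split; split.
- move=> hC a a1 N N0 mu; have a0 : 0 < a by apply: lt_trans a1.
  split; first exact: max_to_cross.
  move=> hc; split; first exact: cross_inPN.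
  move=> nu hnu.
  have e1 := Pfin_Ea_le (PN_Pfin N0 hnu) (ltW a1).
  have e2 := (hC N N0 mu hc).2 nu hnu.
  have e3 := cross_const hc a0.
  lra.
- move=> hC N N0 mu hc; split; first exact: cross_inPN.
  move=> nu hnu; apply/ler_addgt0Pr => e e0.
  have a1 : 1 < 1 + 2 * e by lra.
  have e1 := ((hC _ a1 N N0 mu).2 hc).2 nu hnu.
  have e2 := Pfin_gap (PN_Pfin N0 hnu) (ltW a1).
  have e3 := cross_const hc (lt_trans ltr01 a1).
  have : 2^-1 * (1 + 2 * e - 1) = e :> R by field.
  lra.
- move=> hC a a1 mu; have a0 : 0 < a by apply: lt_trans a1.
  split; first exact: max_to_crossfin.
  move=> hc; split; first exact: crossfin_Pfin.
  move=> nu hnu.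
  have e1 := Pfin_Ea_le hnu (ltW a1).
  have e2 := (hC mu hc).2 nu hnu.
  have e3 := crossfin_const hc a0.
  lra.
- move=> hC mu hc; split; first exact: crossfin_Pfin.
  move=> nu hnu; apply/ler_addgt0Pr => e e0.
  have a1 : 1 < 1 + 2 * e by lra.
  have e1 := ((hC _ a1 mu).2 hc).2 nu hnu.
  have e2 := Pfin_gap hnu (ltW a1).
  have e3 := crossfin_const hc (lt_trans ltr01 a1).
  have : 2^-1 * (1 + 2 * e - 1) = e :> R by field.
  lra.
Qed.
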